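(* Let $X$ be a finite set, $k$ an integer with $1\le k\le|X|-1$, $\mathfrak{C}$ a family of choice functions for $\binom{X}{k}$ and $\mathcal{F}$ the set of (not necessarily simple) averaging functions for $\mathfrak{C}$. Assume $r=r(\mathcal{F})$ satisfies $4\le r<\infty$. Then (1) for every $f\in\mathcal{F}_{[r]}$ there is $\ell(f)\in\{1,\dots,r\}$ such that for every $Y\in\binom{X}{k}$ and every $\bar a\in Y^r$ which is not one-to-one, $f_Y(\bar a)=a_{\ell(f)}$; and (2) $r\le k$.
   Context: $\binom{X}{k}=\{Y\subseteq X:|Y|=k\}$; choice functions satisfy $c(Y)\in Y$. $\mathcal{F}_{[r]}$ is the set of families $f=\langle f_Y:Y\in\binom{X}{k}\rangle$ with $f_Y:Y^r\to Y$, $f_Y(x_1,\dots,x_r)\in\{x_1,\dots,x_r\}$, such that for all $c_1,\dots,c_r\in\mathfrak{C}$, $Y\mapsto f_Y(c_1(Y),\dots,c_r(Y))$ is in $\mathfrak{C}$; $\mathcal{F}=\bigcup_r\mathcal{F}_{[r]}$. $f\in\mathcal{F}_{[r]}$ is a monarchy if for some $t$, $f_Y(\bar x)=x_t$ for all $Y$ and $\bar x\in Y^r$. $r(\mathcal{F})=\min\{r\ge2:\text{some } f\in\mathcal{F}_{[r]}\text{ is not a monarchy}\}$. Standing assumption: every simple $f\in\mathcal{F}$ (with $f_Y$ the restriction of a single function independent of $Y$) is a monarchy. *)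

(* Defs.v *)
From mathcomp Require Import all_boot.
Set Implicit Arguments. Unset Strict Implicit. Unset Printing Implicit Defensive.

Definition kset (X : finType) (k : nat) := {Y : {set X} | #|Y| == k}.

Definition cfun (X : finType) (k : nat) := {ffun kset X k -> X}.

Definition is_choice (X : finType) (k : nat) (c : cfun X k) : Prop :=
  forall Y : kset X k, c Y \in val Y.

(* A family f = <f_Y : Y in binom(X,k)> of r-ary functions; f Y is only
   relevant on tuples all of whose entries lie in Y (i.e. on Y^r). *)
Definition rfam (X : finType) (k r : nat) := kset X k -> r.-tuple X -> X.

Definition in_pow (X : finType) (Y : {set X}) (r : nat) (x : r.-tuple X) :=
  forall i : 'I_r, tnth x i \in Y.

Definition in_F (X : finType) (k : nat) (C : pred (cfun X k)) (r : nat)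
  (f : rfam X k r) : Prop :=
  (forall (Y : kset X k) (x : r.-tuple X), in_pow (val Y) x -> f Y x \in x) /\
  (forall c : 'I_r -> cfun X k, (forall i, C (c i)) ->
     C [ffun Y => f Y [tuple c i Y | i < r]]).

Definition monarchy (X : finType) (k r : nat) (f : rfam X k r) : Prop :=
  exists t : 'I_r, forall (Y : kset X k) (x : r.-tuple X),
    in_pow (val Y) x -> f Y x = tnth x t.

Definition simple (X : finType) (k r : nat) (f : rfam X k r) : Prop :=
  exists g : r.-tuple X -> X, forall (Y : kset X k) (x : r.-tuple X),
    in_pow (val Y) x -> f Y x = g x.

Definition is_rF (X : finType) (k : nat) (C : pred (cfun X k)) (r : nat) : Prop :=
  2 <= r /\
  (exists f : rfam X k r, in_F C f /\ ~ monarchy f) /\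
  (forall r', 2 <= r' -> r' < r ->
     forall f : rfam X k r', in_F C f -> monarchy f).

(* Main.v *)
Require Import Defs.
From mathcomp Require Import all_boot.
From mathcomp Require Import zify.
From Stdlib Require Import Classical.
Set Implicit Arguments. Unset Strict Implicit.

Definition Pp (X : finType) k r (f : rfam X k r) (a b T : 'I_r) :=
  forall (Y : kset X k) (x : r.-tuple X), in_pow (val Y) x ->
    tnth x a = tnth x b -> f Y x = tnth x T.

Lemma minor_inF (X : finType) k (C : pred (cfun X k)) r n (f : rfam X k r) (h : 'I_r -> 'I_n) :
  in_F C f -> in_F C (fun Y (y : n.-tuple X) => f Y [tuple tnth y (h p) | p < r]).
Proof.
case=> [Hc Hcl]; split.
- move=> Y y Hy.
  have Hx : in_pow (val Y) [tuple tnth y (h p) | p < r] by move=> p; rewrite tnth_mktuple.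
  case/tnthP: (Hc Y _ Hx) => p ->; rewrite tnth_mktuple; exact: mem_tnth.
- move=> c Hcc.
  apply: (eq_ind _ (fun z => C z) (Hcl (fun p => c (h p)) (fun p => Hcc (h p)))).
  apply/ffunP => Y; rewrite !ffunE; congr (f Y _).
  by apply: eq_from_tnth => p; rewrite !tnth_mktuple.
Qed.

Lemma minor_T (X : finType) k r n (f : rfam X k r) (h : 'I_r -> 'I_n) (s : 'I_n -> 'I_r) :
  monarchy (fun Y (y : n.-tuple X) => f Y [tuple tnth y (h p) | p < r]) ->
  exists T, forall Y (x : r.-tuple X), in_pow (val Y) x ->
    (forall p, tnth x (s (h p)) = tnth x p) -> f Y x = tnth x T.
Proof.
move=> [t Ht]; exists (s t) => Y x Hx Hsh.
have Hy : in_pow (val Y) [tuple tnth x (s q) | q < n] by move=> q; rewrite tnth_mktuple.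
have := Ht Y _ Hy; rewrite tnth_mktuple => <-; congr (f Y _).
by apply: eq_from_tnth => p; rewrite !tnth_mktuple Hsh.
Qed.

Definition sm m (j : 'I_m.+2) (q : 'I_m.+1) : 'I_m.+2 :=
  inord (if j <= q then q.+1 else q).
Definition hm m (i j : 'I_m.+2) (p : 'I_m.+2) : 'I_m.+1 :=
  inord (if p == j then (if nat_of_ord i < j then nat_of_ord i else (nat_of_ord i).-1)
    else if nat_of_ord j < p then (nat_of_ord p).-1 else nat_of_ord p).

Lemma shm m (i j p : 'I_m.+2) : i != j -> sm j (hm i j p) = if p == j then i else p.
Proof.
move=> Hij; have Hij' : (i : nat) <> j by move=> E; move/eqP: Hij; apply; apply: val_inj.
have Hi := ltn_ord i; have Hj := ltn_ord j; have Hp := ltn_ord p.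
rewrite /sm /hm; case: (eqVneq p j) => [_|Hpj]; apply: val_inj => /=.
- case: (ltnP i j) => Hlt; rewrite (@inordK m); try lia; case: ifP => H; rewrite inordK; lia.
- have Hpj' : (p : nat) <> j by move=> E; move/eqP: Hpj; apply; apply: val_inj.
  case: (ltnP j p) => Hlt; rewrite (@inordK m); try lia; case: ifP => H; rewrite inordK; lia.
Qed.

Lemma compat (X : finType) k r (f : rfam X k r) (Y : kset X k) u v (a b c d T1 T2 : 'I_r)
  (S : 'I_r -> bool) :
  u \in val Y -> v \in val Y -> u != v -> Pp f a b T1 -> Pp f c d T2 ->
  S a = S b -> S c = S d -> S T1 = S T2.
Proof.
move=> Hu Hv Huv H1 H2 Sab Scd.
pose x := [tuple if S p then u else v | p < r].
have Hx : in_pow (val Y) x by move=> p; rewrite tnth_mktuple; case: (S p).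
have E1 := H1 Y x Hx; have E2 := H2 Y x Hx.
rewrite /x !tnth_mktuple Sab in E1; rewrite /x !tnth_mktuple Scd in E2.
move: (E1 erefl) (E2 erefl) => ->; case: (S T1); case: (S T2) => // E;
 by rewrite E eqxx in Huv.
Qed.

Lemma exists_other r (i j l : 'I_r) : 3 < r -> exists s : 'I_r, [&& s != i, s != j & s != l].
Proof.
move=> Hr; case: (pickP (fun s : 'I_r => [&& s != i, s != j & s != l])) => [s Hs|H].
  by exists s.
have : #|'I_r| <= #|[:: i; j; l]|.
  apply: subset_leq_card; apply/subsetP => s _; move: (H s); rewrite !inE.
  by case: (s == i); case: (s == j); case: (s == l).
move=> /leq_trans /(_ (card_size _)); rewrite card_ord /=; lia.
Qed.

Lemma nonuniq (X : finType) r (x : r.-tuple X) : ~~ uniq x ->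
  exists a b : 'I_r, a != b /\ tnth x a = tnth x b.
Proof.
move=> Hu; apply: NNPP => H; move/negP: Hu; apply; apply/tuple_uniqP => a b E.
apply: NNPP => Hab; apply: H; exists a, b; split => //; exact/eqP.
Qed.

Lemma mainL (X : finType) k r (f : rfam X k r) (Y0 : kset X k) u v (i j l : 'I_r) :
  u \in val Y0 -> v \in val Y0 -> u != v ->
  (forall a b : 'I_r, a != b -> exists T, Pp f a b T) -> 3 < r ->
  i != j -> l != i -> l != j -> Pp f i j l ->
  forall a b, a != b -> Pp f a b l.
Proof.
move=> Hu Hv Huv M Hr Hij Hli Hlj Hl.
have Aux : forall a b, a != b -> a = l -> Pp f a b l.
  move=> a b Hab Hal; case: (M a b Hab) => T HT.
  suff HTab : (T == a) || (T == b).
    move=> Y x Hx Exab; rewrite (HT Y x Hx Exab).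
    by case/orP: HTab => /eqP ->; rewrite -?Exab Hal.
  have Hil : (i == l) = false by rewrite eq_sym (negbTE Hli).
  have Hjl : (j == l) = false by rewrite eq_sym (negbTE Hlj).
  case: (boolP ((b != i) && (b != j))) => [/andP [Hbi Hbj]|Hb].
  - have : ((l == a) || (l == b)) = ((T == a) || (T == b)).
      apply: (compat (S := fun z => (z == a) || (z == b)) Hu Hv Huv Hl HT) => /=.
        by rewrite Hal Hil Hjl ![_ == b]eq_sym (negbTE Hbi) (negbTE Hbj).
      by rewrite !eqxx orbT.
    by rewrite Hal eqxx.
  - pose i' := if b == i then j else i.
    have Hbij : (b == i) || (b == j) by move: Hb; case: (b == i); case: (b == j).
    have Hi'b : (i' == b) = false.
      rewrite /i'; case: ifP => /eqP Hb'; apply/negbTE.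
        by rewrite Hb' eq_sym.
      by rewrite eq_sym; apply/eqP.
    have Hi'l : (i' == l) = false by rewrite /i'; case: (b == i).
    have [s /and3P [Hsi Hsj Hsl]] := exists_other i j l Hr.
    have Hi's : i' != s.
      by rewrite /i'; case: (b == i); rewrite eq_sym.
    case: (M i' s Hi's) => T' HT'.
    have : (l == l) = (T' == l).
      apply: (compat (S := fun z => z == l) Hu Hv Huv Hl HT') => /=.
        by rewrite Hil Hjl.
      by rewrite Hi'l (negbTE Hsl).
    rewrite eqxx => /esym /eqP ET'; rewrite ET' in HT'.
    have : ((l == a) || (l == b)) = ((T == a) || (T == b)).
      apply: (compat (S := fun z => (z == a) || (z == b)) Hu Hv Huv HT' HT) => /=.
        rewrite Hal Hi'b Hi'l (negbTE Hsl).
        case/orP: Hbij => /eqP ->; by rewrite ?(negbTE Hsi) ?(negbTE Hsj).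
      by rewrite !eqxx orbT.
    by rewrite Hal eqxx.
move=> a b Hab.
case: (eqVneq a l) => [Hal|Hal]; first exact: Aux.
case: (eqVneq b l) => [Hbl|Hbl].
  move=> Y x Hx E; apply: (Aux b a _ Hbl) => //; by rewrite eq_sym.
case: (M a b Hab) => T HT.
have : (l == l) = (T == l).
  apply: (compat (S := fun z => z == l) Hu Hv Huv Hl HT) => /=.
    by rewrite ![_ == l]eq_sym (negbTE Hli) (negbTE Hlj).
  by rewrite (negbTE Hal) (negbTE Hbl).
rewrite eqxx => /esym /eqP ET; rewrite ET in HT; exact: HT.
Qed.

Lemma inord_neq m a b : a <= m.+1 -> b <= m.+1 -> a <> b ->
  (inord a : 'I_m.+2) != inord b.
Proof.
move=> Ha Hb Hab; apply/eqP => E; apply: Hab; have := f_equal val E; rewrite /= !inordK //.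
Qed.

Lemma part1 (X : finType) k (C : pred (cfun X k)) m :
  3 < m.+2 -> is_rF C m.+2 -> forall f : rfam X k m.+2, in_F C f ->
  exists l : 'I_m.+2, forall (Y : kset X k) (a : m.+2.-tuple X),
       in_pow (val Y) a -> ~~ uniq a -> f Y a = tnth a l.
Proof.
move=> Hr [_ [[f0 [Hf0 Hnm]] Hlow]] f Hf.
have M : forall a b : 'I_m.+2, a != b -> exists T, Pp f a b T.
  move=> a b Hab.
  have := minor_T (sm b) (Hlow m.+1 _ _ _ (minor_inF (hm a b) Hf)).
  case=> [||T HT]; try lia.
  exists T => Y x Hx Eab; apply: HT Hx _ => p; rewrite shm //.
  by case: eqVneq => [->|].
have HE : exists (Y : kset X k) (u v : X), u \in val Y /\ v \in val Y /\ u != v.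
  apply: NNPP => Hno; apply: Hnm; exists ord0 => Y x Hx.
  case: Hf0 => Hc0 _.
  case/tnthP: (Hc0 Y x Hx) => p ->.
  case: (eqVneq (tnth x p) (tnth x ord0)) => // Hne; exfalso; apply: Hno.
  by exists Y, (tnth x p), (tnth x ord0).
case: HE => Y0 [u [v [Hu [Hv Huv]]]].
pose o0 : 'I_m.+2 := inord 0; pose o1 : 'I_m.+2 := inord 1.
pose o2 : 'I_m.+2 := inord 2; pose o3 : 'I_m.+2 := inord 3.
have H01 : o0 != o1 by apply: inord_neq; lia.
have H23 : o2 != o3 by apply: inord_neq; lia.
have H20 : (o2 == o0) = false by apply/negbTE; apply: inord_neq; lia.
have H21 : (o2 == o1) = false by apply/negbTE; apply: inord_neq; lia.
have H30 : (o3 == o0) = false by apply/negbTE; apply: inord_neq; lia.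
have H31 : (o3 == o1) = false by apply/negbTE; apply: inord_neq; lia.
case: (M o0 o1 H01) => T1 HT1; case: (M o2 o3 H23) => T2 HT2.
have E : ((T1 == o0) || (T1 == o1)) = ((T2 == o0) || (T2 == o1)).
  apply: (compat (S := fun z => (z == o0) || (z == o1)) Hu Hv Huv HT1 HT2) => /=.
    by rewrite !eqxx orbT eq_sym.
  by rewrite H20 H21 H30 H31.
have HE2 : exists l i j : 'I_m.+2, [/\ i != j, l != i, l != j & Pp f i j l].
  case: (boolP ((T1 == o0) || (T1 == o1))) => H1.
  - rewrite H1 in E; exists T2, o2, o3; split => //.
      by case/orP: (esym E) => /eqP ->; rewrite eq_sym ?H20 ?H21.
    by case/orP: (esym E) => /eqP ->; rewrite eq_sym ?H30 ?H31.
  - exists T1, o0, o1; split => //.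
      by move: H1; case: (T1 == o0).
    by move: H1; case: (T1 == o1); rewrite orbC.
case: HE2 => l [i [j [Hij Hli Hlj Hl]]].
have Hall := mainL Hu Hv Huv M Hr Hij Hli Hlj Hl.
exists l => Y x Hx Hnu.
have [a [b [Hab Eab]]] := nonuniq Hnu.
exact: Hall Hab Y x Hx Eab.
Qed.

Theorem claim16p2 (X : finType) (k : nat) (C : pred (cfun X k)) (r : nat) :
  1 <= k -> k <= #|X| - 1 ->
  (forall c, C c -> is_choice c) ->
  (* standing assumption: every simple f in F is a monarchy *)
  (forall (r' : nat) (f : rfam X k r'), in_F C f -> simple f -> monarchy f) ->
  is_rF C r -> 4 <= r ->
  (forall f : rfam X k r, in_F C f ->
     exists l : 'I_r, forall (Y : kset X k) (a : r.-tuple X),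
       in_pow (val Y) a -> ~~ uniq a -> f Y a = tnth a l)
  /\ r <= k.
Proof.
move=> Hk1 Hk2 Hch Hsimp.
case: r => [|[|m]] // HrF Hr4.
have P1 := part1 Hr4 HrF.
split => //.
case: (leqP m.+2 k) => // Hlt; exfalso.
case: HrF => _ [[f0 [Hf0 Hnm]] _]; apply: Hnm.
case: (P1 f0 Hf0) => l Hl; exists l => Y x Hx; apply: (Hl _ _ Hx).
apply/negP => Hux.
have Hs : {subset x <= enum (val Y)}.
  by move=> z /tnthP [p ->]; rewrite mem_enum; exact: Hx p.
have := uniq_leq_size Hux Hs.
rewrite size_tuple -cardE (eqP (valP Y)); lia.
Qed.
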